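(* In the Setting, suppose that $r=\sqrt{K-\lambda_1}$ and $s=-\sqrt{K-\lambda_1}$. Then \[ m=\frac{(-s)(n-1)}{n+s},\quad V=\frac{n(-s)(n-1)}{n+s},\quad K=(-s)(n-1),\quad \lambda_1=(-s)(n+s-1),\quad \lambda_2=\frac{(-s)(n-1)(n+s)}{n}. \]
   Context: Setting: $\Gamma$ is a primitive strongly regular graph with parameters $(v,k,\lambda,\mu)$ (a $k$-regular graph on $v$ vertices, any two adjacent vertices having $\lambda$ and any two distinct non-adjacent vertices having $\mu$ common neighbours; primitive means $\Gamma$ and its complement are connected), with spectrum $k^1, r^f, s^g$ where $k>r>s$ and exponents are multiplicities. $C$ is a coclique in $\Gamma$ of size $c=\frac{vs}{s-k}$. A $K$-regular graph on $V$ vertices, neither complete nor edgeless, is a divisible design graph with parameters $(V,K,\lambda_1,\lambda_2;m,n)$ if its vertex set can be partitioned into $m$ canonical classes of size $n$ such that two distinct vertices in the same class have exactly $\lambda_1$ common neighbours and two vertices in different classes have exactly $\lambda_2$ common neighbours; it is proper unless $m=1$, $n=1$ or $\lambda_1=\lambda_2$. It is assumed that the subgraph $\Delta$ induced on $V(\Gamma)\setminus C$ is a proper divisible design graph with parameters $(V,K,\lambda_1,\lambda_2;m,n)$. *)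

(* Defs.v *)
From mathcomp Require Import all_boot all_order all_algebra.
Set Implicit Arguments. Unset Strict Implicit. Unset Printing Implicit Defensive.
Import Order.TTheory GRing.Theory Num.Theory.
Local Open Scope ring_scope.

Definition simple_graph (T : finType) (e : rel T) : Prop :=
  (forall x y, e x y = e y x) /\ (forall x, ~~ e x x).

Definition nbhd_in (T : finType) (e : rel T) (D : {set T}) (x : T) : {set T} :=
  [set y in D | e x y].

Definition compl_rel (T : finType) (e : rel T) : rel T :=
  [rel x y | (x != y) && ~~ e x y].

Definition connected_graph (T : finType) (e : rel T) : Prop :=
  forall x y : T, connect e x y.

Definition srg (T : finType) (e : rel T) (v k lam mu : nat) : Prop :=
  [/\ simple_graph e, #|T| = v,
      (forall x, #|nbhd_in e setT x| = k),
      (forall x y, x != y -> e x y ->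
         #|nbhd_in e setT x :&: nbhd_in e setT y| = lam) &
      (forall x y, x != y -> ~~ e x y ->
         #|nbhd_in e setT x :&: nbhd_in e setT y| = mu)].

Definition primitive (T : finType) (e : rel T) : Prop :=
  connected_graph e /\ connected_graph (compl_rel e).

Definition adjmx (R : nzRingType) (T : finType) (e : rel T) : 'M[R]_#|T| :=
  \matrix_(i, j) ((e (enum_val i) (enum_val j) : nat)%:R).

Definition srg_spectrum (R : fieldType) (T : finType) (e : rel T)
    (k r s : R) : Prop :=
  forall a : R, eigenvalue (adjmx R e) a <-> (a = k \/ a = r \/ a = s).

Definition coclique (T : finType) (e : rel T) (C : {set T}) : Prop :=
  forall x y, x \in C -> y \in C -> ~~ e x y.

Definition ddg_on (T : finType) (e : rel T) (D : {set T})
    (V K l1 l2 m n : nat) : Prop :=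
  [/\ #|D| = V,
      (forall x, x \in D -> #|nbhd_in e D x| = K),
      (exists x y, [/\ x \in D, y \in D, x != y & ~~ e x y]),
      (exists x y, [/\ x \in D, y \in D & e x y]) &
      exists P : {set {set T}},
        [/\ partition P D, #|P| = m,
            (forall B, B \in P -> #|B| = n),
            (forall x y, x \in D -> y \in D -> x != y ->
               pblock P x = pblock P y ->
               #|nbhd_in e D x :&: nbhd_in e D y| = l1) &
            (forall x y, x \in D -> y \in D ->
               pblock P x != pblock P y ->
               #|nbhd_in e D x :&: nbhd_in e D y| = l2)]].

Definition proper_ddg_on (T : finType) (e : rel T) (D : {set T})
    (V K l1 l2 m n : nat) : Prop :=
  [/\ ddg_on e D V K l1 l2 m n, m != 1%N, n != 1%N & l1 != l2].

(* Main.v *)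
Require Import Defs.
From mathcomp Require Import all_boot all_order all_algebra.
From mathcomp Require Import ring lra.
Set Implicit Arguments. Unset Strict Implicit. Unset Printing Implicit Defensive.
Import Order.TTheory GRing.Theory Num.Theory.
Local Open Scope ring_scope.


Section Alg.
Variable R : comNzRingType.

Lemma sq_sum (I : finType) (A : {set I}) (g : I -> R) :
  (\sum_(j in A) g j) ^+ 2 = \sum_(j in A) \sum_(j' in A) g j * g j'.
Proof. by rewrite expr2 mulr_suml; apply: eq_bigr => j _; rewrite mulr_sumr. Qed.

Lemma L1 (I J : finType) (A : {set I}) (B : {set J}) (f : I -> J -> R) :
  \sum_(i in A) \sum_(i' in A) (\sum_(j in B) f i j * f i' j) ^+ 2 =
  \sum_(j in B) \sum_(j' in B) (\sum_(i in A) f i j * f i j') ^+ 2.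
Proof.
under eq_bigr => i _ do under eq_bigr => i' _ do rewrite sq_sum.
under [RHS]eq_bigr => j _ do under eq_bigr => j' _ do rewrite sq_sum.
under eq_bigr => i _ do rewrite exchange_big.
under eq_bigr => i _ do under eq_bigr => j _ do rewrite exchange_big.
rewrite exchange_big.
under eq_bigr => j _ do rewrite exchange_big.
apply: eq_bigr => j _; apply: eq_bigr => j' _; apply: eq_bigr => i _;
  apply: eq_bigr => i' _; ring.
Qed.

Lemma L2 (I J : finType) (A : {set I}) (B : {set J}) (f : I -> J -> R) :
  \sum_(i in A) \sum_(i' in A) \sum_(j in B) f i j * f i' j =
  \sum_(j in B) (\sum_(i in A) f i j) ^+ 2.
Proof.
under [RHS]eq_bigr => j _ do rewrite sq_sum.
rewrite [RHS]exchange_big.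
apply: eq_bigr => i _.
rewrite [RHS]exchange_big.
by [].
Qed.

End Alg.


Lemma card_sum (R : nzRingType) (T : finType) (A : {set T}) (P : pred T) :
  (#|[set x in A | P x]|%:R : R) = \sum_(x in A) ((P x : nat)%:R).
Proof.
rewrite -sum1_card natr_sum.
rewrite (eq_bigl (fun x => (x \in A) && P x)); last by move=> x; rewrite inE.
rewrite big_mkcondr /=; apply: eq_bigr => x _; by case: (P x).
Qed.

Lemma common_card (R : nzRingType) (T : finType) (e : rel T) (A : {set T}) x y :
  (#|nbhd_in e A x :&: nbhd_in e A y|%:R : R) =
  \sum_(z in A) (((e x z && e y z) : bool) : nat)%:R.
Proof.
rewrite -card_sum; congr (_%:R); apply: eq_card => z.
by rewrite !inE andbACA andbb.
Qed.

Lemma nbhd_card (R : nzRingType) (T : finType) (e : rel T) (A : {set T}) x :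
  (#|nbhd_in e A x|%:R : R) = \sum_(z in A) ((e x z : bool) : nat)%:R.
Proof.
rewrite -[nbhd_in e A x]setIid common_card.
by apply: eq_bigr => z _; rewrite andbb.
Qed.

Lemma sumT_ord (R : nzRingType) (T : finType) (F : T -> R) :
  \sum_(i < #|T|) F (enum_val i) = \sum_(z in [set: T]) F z.
Proof.
rewrite -big_enum_val. apply: eq_bigl => z; by rewrite !inE.
Qed.

Lemma AA_eq (R : fieldType) (T : finType) (e : rel T) v k lam mu :
  srg e v k lam mu ->
  adjmx R e *m adjmx R e =
  k%:R%:M + lam%:R *: adjmx R e + mu%:R *: (const_mx 1 - 1%:M - adjmx R e).
Proof.
case=> [[esym eirr]] _ hk hl hm.
apply/matrixP => i j; rewrite !mxE.
have -> : \sum_(l < #|T|) adjmx R e i l * adjmx R e l j =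
   (#|nbhd_in e setT (enum_val i) :&: nbhd_in e setT (enum_val j)|%:R : R).
  rewrite common_card -sumT_ord; apply: eq_bigr => l _; rewrite !mxE.
  by rewrite (esym (enum_val l) (enum_val j)); case: (e (enum_val i) _); case: (e (enum_val j) _); rewrite /= ?mul1r ?mul0r.
have [->|neq] := eqVneq i j.
  rewrite setIid hk (negbTE (eirr _)) /=. ring.
set x := enum_val i; set y := enum_val j.
have nxy : x != y by apply: contra neq => /eqP /enum_val_inj ->.
rewrite /=.
case exy: (e x y).
  by rewrite hl //=; ring.
by rewrite hm ?exy //=; ring.
Qed.

Lemma srg_eig (R : fieldType) (T : finType) (e : rel T) v k lam mu (a : R) :
  srg e v k lam mu -> eigenvalue (adjmx R e) a -> a != k%:R ->
  a ^+ 2 - (lam%:R - mu%:R) * a - (k%:R - mu%:R) = 0.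
Proof.
move=> hs /eigenvalueP [u hu un0] ak.
have hs' := hs; case: hs' => [[esym eirr]] _ hk _ _.
set A := adjmx R e in hu *.
have rowsum i : \sum_j A i j = k%:R.
  rewrite -(hk (enum_val i)) nbhd_card -sumT_ord.
  by apply: eq_bigr => l _; rewrite !mxE.
have S0 : u *m (const_mx 1 : 'M[R]_#|T|) = 0.
  have AJ : A *m (const_mx 1 : 'M_(#|T|, #|T|)) = k%:R *: const_mx 1.
    apply/matrixP => i j; rewrite !mxE.
    rewrite mulr1 -(rowsum i); apply: eq_bigr => l _. by rewrite [const_mx 1 l j]mxE mulr1.
  have eq1 : (u *m A) *m (const_mx 1 : 'M[R]_#|T|) = k%:R *: (u *m const_mx 1).
    by rewrite -mulmxA AJ scalemxAr.
  rewrite hu -scalemxAl in eq1.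
  move/eqP: eq1; rewrite -subr_eq0 -scalerBl scaler_eq0 subr_eq0 (negbTE ak) /=.
  by move/eqP.
have := congr1 (fun w => w *m A) hu.
rewrite -mulmxA (AA_eq R hs) -scalemxAl hu.
rewrite -/A !mulmxDr -!scalemxAr !mulmxBr mul_mx_scalar hu S0 mulmx1.
move/eqP; rewrite -subr_eq0.
have -> : k%:R *: u + lam%:R *: (a *: u) + mu%:R *: (0 - u - a *: u) - a *: (a *: u)
   = - ((a ^+ 2 - (lam%:R - mu%:R) * a - (k%:R - mu%:R)) *: u).
  by apply/rowP => j; rewrite !mxE; ring.
by rewrite oppr_eq0 scaler_eq0 (negbTE un0) orbF => /eqP.
Qed.


Lemma sum_diag (R : nzRingType) (T : finType) (C : {set T}) (A0 B0 : R) z :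
  z \in C ->
  \sum_(z' in C) (if z == z' then A0 else B0) = A0 + (#|C|%:R - 1) * B0.
Proof.
move=> zC; rewrite (big_setD1 z zC) eqxx /=.
rewrite (eq_bigr (fun _ => B0)); last first.
  by move=> z'; rewrite !inE => /andP [nz _]; rewrite eq_sym (negbTE nz).
rewrite sumr_const (cardsD1 z C) zC add1n mulrSr addrK mulr_natl. by [].
Qed.

Lemma sum_block (R : nzRingType) (T : finType) (D : {set T}) (P : {set {set T}})
    (n : nat) (A0 B0 C0 : R) x :
  partition P D -> (forall B, B \in P -> #|B| = n) -> x \in D ->
  \sum_(y in D) (if x == y then A0 else if pblock P x == pblock P y then B0 else C0)
  = A0 + (n%:R - 1) * B0 + (#|D|%:R - n%:R) * C0.
Proof.
move=> /and3P [/eqP cov triv _] hn xD.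
have xc : x \in cover P by rewrite cov.
have Bin := pblock_mem xc.
have xB : x \in pblock P x by rewrite mem_pblock.
have BD : pblock P x \subset D by rewrite -cov; apply: bigcup_sup Bin.
have h2 : \sum_(y in D :\: pblock P x)
    (if x == y then A0 else if pblock P x == pblock P y then B0 else C0)
    = \sum_(y in D :\: pblock P x) C0.
  apply: eq_bigr => y; rewrite !inE => /andP [nyB yD].
  have -> : (x == y) = false by apply/negbTE; apply: contra nyB => /eqP <-.
  by rewrite (eq_pblock _ triv xc) (negbTE nyB).
have h1 : \sum_(y in pblock P x :\ x)
    (if x == y then A0 else if pblock P x == pblock P y then B0 else C0)
    = \sum_(y in pblock P x :\ x) B0.
  apply: eq_bigr => y; rewrite !inE => /andP [nyx yB].
  by rewrite eq_sym (negbTE nyx) (eq_pblock _ triv xc) yB.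
rewrite (big_setID (pblock P x)) /= h2.
rewrite (setIidPr BD) (big_setD1 x xB) eqxx /= h1.
rewrite !sumr_const; congr (_ + _ + _).
  by rewrite -(hn _ Bin) (cardsD1 x (pblock P x)) xB add1n mulrSr addrK mulr_natl.
rewrite cardsD (setIidPr BD) (hn _ Bin) -natrB ?mulr_natl //.
by rewrite -(hn _ Bin); apply: subset_leq_card.
Qed.


Lemma final_alg (R : realFieldType) (t k K mu l1 l2 c V n m v : R) :
  0 < t -> t ^+ 2 = K - l1 -> mu = k - t ^+ 2 ->
  c * (k ^+ 2 + (c - 1) * mu ^+ 2) =
    V * ((k - K) ^+ 2 + (n - 1) * (mu - l1) ^+ 2 + (V - n) * (mu - l2) ^+ 2) ->
  c * (k + (c - 1) * mu) = V * (k - K) ^+ 2 ->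
  V * ((k - K) + (n - 1) * (mu - l1) + (V - n) * (mu - l2)) = c * k ^+ 2 ->
  c * k = V * (k - K) ->
  V = m * n -> v = c + V -> c * (k + t) = v * t ->
  0 <= c -> 0 < V -> m != 1 -> n != 1 -> l1 != l2 ->
  [/\ m = (- - t) * (n - 1) / (n + - t),
      V = n * (- - t) * (n - 1) / (n + - t),
      K = (- - t) * (n - 1),
      l1 = (- - t) * (n + - t - 1) &
      l2 = (- - t) * (n - 1) * (n + - t) / n].
Proof.
move=> tpos tt hmu I1 I2 I3 I4 hV hv hc c0 V0 m1 n1 l12.
set d := k - K.
have hl1 : mu - l1 = d by rewrite /d hmu; lra.
have vpos : 0 < v by rewrite hv; lra.
have cn0 : c != 0.
  apply/negP => /eqP c0'; move: hc; rewrite c0' mul0r => /eqP.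
  by rewrite eq_sym mulf_eq0 !gt_eqF.
have Erho : k + (c - 1) * mu = k * d.
  apply: (mulfI cn0); rewrite I2 [c * (k * d)]mulrA I4 /d; ring.
have Vn0 : V != 0 by rewrite gt_eqF.
have Erho' : n * (d + (m - 1) * (mu - l2)) = k * d.
  have h3 : V * (n * (d + (m - 1) * (mu - l2))) = c * k ^+ 2.
    by rewrite -I3 hl1 hV /d; ring.
  have h4 : c * k ^+ 2 = V * (k * d) by rewrite expr2 [c * _]mulrA I4 /d; ring.
  by apply: (mulfI Vn0); rewrite h3 h4.
set a := k - mu. set b := n * (d - (mu - l2)).
have E1 : (c - 1) * a = (m - 1) * b.
  rewrite /a /b; move: Erho Erho' I4; rewrite hV /d; lra.
have I1' : c * (k ^+ 2 + (c - 1) * mu ^+ 2) =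
    m * n * (d ^+ 2 + (n - 1) * d ^+ 2 + (m * n - n) * (mu - l2) ^+ 2).
  by rewrite I1 hl1 hV.
have E2 : (c - 1) * a ^+ 2 = (m - 1) * b ^+ 2.
  apply/eqP; rewrite -subr_eq0; apply/eqP.
  have -> : (c - 1) * a ^+ 2 - (m - 1) * b ^+ 2 =
     (n * (d + (m - 1) * (mu - l2))) ^+ 2 - (k + (c - 1) * mu) ^+ 2 +
     (c * (k ^+ 2 + (c - 1) * mu ^+ 2) -
      m * n * (d ^+ 2 + (n - 1) * d ^+ 2 + (m * n - n) * (mu - l2) ^+ 2)).
    by rewrite /a /b; ring.
  by rewrite Erho Erho' I1' !subrr addr0.
have E3 : (m - 1) * b * (b - a) = 0.
  have -> : (m - 1) * b * (b - a) = (m - 1) * b ^+ 2 - a * ((m - 1) * b) by ring.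
  by rewrite -E1 -E2; ring.
have nn0 : n != 0.
  by apply/negP => /eqP n0; move: V0; rewrite hV n0 mulr0 ltxx.
have bn0 : b != 0.
  rewrite /b mulf_eq0 (negbTE nn0) /=.
  have -> : d - (mu - l2) = l2 - l1 by rewrite -hl1; ring.
  by rewrite subr_eq0 eq_sym.
have m1n0 : m - 1 != 0 by rewrite subr_eq0.
have ba : b = a.
  have h : b - a = 0 by apply: (mulfI (mulf_neq0 m1n0 bn0)); rewrite mulr0.
  by apply/eqP; rewrite -subr_eq0 h.
have at2 : a = t ^+ 2 by rewrite /a hmu; ring.
have an0 : a != 0 by rewrite at2 expf_eq0 /= gt_eqF.
have cm : c = m.
  have : (c - 1) * a = (m - 1) * a by rewrite E1 ba.
  by move/(mulIf an0)/eqP; rewrite (can_eq (addrK _)) => /eqP.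
have knt : k = n * t.
  have : c * (k + t) = c * ((1 + n) * t) by rewrite hc hv hV -cm; ring.
  by move/(mulfI cn0) => h; move: h; lra.
have dt : d = t.
  have : c * (n * t) = c * (n * d) by rewrite -knt I4 hV -cm /d; ring.
  by move/(mulfI cn0)/(mulfI nn0).
have hK : K = n * t - t by rewrite -knt -dt /d; ring.
have hl1' : l1 = K - t ^+ 2 by rewrite tt; ring.
have tn0 : t != 0 by rewrite gt_eqF.
have Ec : n + (c - 1) * (n - t) = n * t.
  apply: (mulfI tn0); move: Erho; rewrite hmu knt dt => h.
  have -> : t * (n + (c - 1) * (n - t)) = n * t + (c - 1) * (n * t - t ^+ 2) by ring.
  by rewrite h; ring.
have ntn0 : n - t != 0.
  apply/negP => /eqP h0.
  have nt : n = t by apply/eqP; rewrite -subr_eq0 h0.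
  move: Ec; rewrite h0 mulr0 addr0 => h1.
  have : n * (t - 1) = 0 by rewrite mulrBr mulr1 -h1 subrr.
  move/eqP; rewrite mulf_eq0 (negbTE nn0) /= subr_eq0 => /eqP t1.
  by move: n1; rewrite nt t1 eqxx.
have hm : m * (n - t) = t * (n - 1) by rewrite -cm; move: Ec; lra.
have hnt : n + - t = n - t by [].
rewrite opprK.
split.
- by rewrite -hm mulfK.
- apply: (mulIf ntn0); rewrite divfK // hV.
  have -> : m * n * (n - t) = n * (m * (n - t)) by ring.
  by rewrite hm; ring.
- by rewrite hK; ring.
- by rewrite hl1' hK; ring.
- apply: (mulIf nn0); rewrite divfK //.
  move: ba; rewrite /b at2 dt hmu knt; lra.
Qed.


Lemma prodb (R : nzRingType) (a b : bool) :
  ((a : nat)%:R * (b : nat)%:R : R) = ((a && b : bool) : nat)%:R.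
Proof. by case: a; case: b; rewrite /= ?mul1r ?mul0r. Qed.

Lemma split_T (R : nzRingType) (T : finType) (C : {set T}) (f : T -> R) :
  \sum_(x in [set: T]) f x = \sum_(x in C) f x + \sum_(x in ~: C) f x.
Proof. by rewrite (big_setID C) setTI setTD. Qed.

Theorem mainTheorem9 (R : rcfType) (T : finType) (e : rel T)
    (v k lam mu : nat) (r s : R) (C : {set T})
    (V K l1 l2 m n : nat) :
  srg e v k lam mu ->
  primitive e ->
  srg_spectrum e k%:R r s ->
  k%:R > r -> r > s ->
  coclique e C ->
  (#|C|%:R : R) = v%:R * s / (s - k%:R) ->
  proper_ddg_on e (~: C) V K l1 l2 m n ->
  r = Num.sqrt (K%:R - l1%:R) ->
  s = - Num.sqrt (K%:R - l1%:R) ->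
  [/\ (m%:R : R) = (- s) * (n%:R - 1) / (n%:R + s),
      (V%:R : R) = n%:R * (- s) * (n%:R - 1) / (n%:R + s),
      (K%:R : R) = (- s) * (n%:R - 1),
      (l1%:R : R) = (- s) * (n%:R + s - 1) &
      (l2%:R : R) = (- s) * (n%:R - 1) * (n%:R + s) / n%:R].
Proof.
move=> hsrg hprim hspec hkr hrs hcoc hc hddg hr hs.
have hsrg' := hsrg; case: hsrg' => [[esym eirr]] hv hk hl hm.
set t := Num.sqrt (K%:R - l1%:R) in hr hs *.
have tpos : 0 < t by move: hrs; rewrite hr hs; lra.
have tt : t ^+ 2 = K%:R - l1%:R.
  have := tpos; rewrite /t sqrtr_gt0 => /ltW h; by rewrite sqr_sqrtr.
have er : eigenvalue (adjmx R e) t by apply/(hspec t); right; left.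
have es : eigenvalue (adjmx R e) (- t) by apply/(hspec (- t)); right; right.
have tk : t != k%:R by rewrite -hr lt_eqF.
have sk : - t != k%:R by rewrite -hs lt_eqF // (lt_trans hrs).
have Et := srg_eig hsrg er tk.
have Es := srg_eig hsrg es sk.
have hlm : lam = mu.
  have h : ((lam%:R : R) - mu%:R) * (t + t) = 0 by move: Et Es; rewrite sqrrN; lra.
  move/eqP: h; rewrite mulf_eq0 (negbTE (lt0r_neq0 (addr_gt0 tpos tpos))) orbF.
  by rewrite subr_eq0 eqr_nat => /eqP.
subst lam.
have hmu : (mu%:R : R) = k%:R - t ^+ 2 by move: Et; rewrite subrr mul0r subr0; lra.
case: hddg => -[hVD hKD [x0 [y0 [x0D _ _ _]]] _ [P [hpart hPm hn hl1 hl2]]] m1 n1 l12.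
set D := ~: C in hVD hKD x0D hl1 hl2 hpart.
have fa : forall z, z \in C -> \sum_(x in D) ((e z x : bool) : nat)%:R = (k%:R : R).
  move=> z zC; rewrite -(hk z) nbhd_card (split_T C) [\sum_(x in C) _]big1 ?add0r //.
  by move=> x xC; rewrite (negbTE (hcoc _ _ zC xC)).
have fb : forall z z', z \in C -> z' \in C ->
    \sum_(x in D) (((e z x : bool) : nat)%:R * ((e z' x : bool) : nat)%:R)
    = (if z == z' then k%:R else mu%:R : R).
  move=> z z' zC z'C; under eq_bigr => x _ do rewrite prodb.
  case: eqVneq => [<-|nz].
    by rewrite -(fa z zC); apply: eq_bigr => x _; rewrite andbb.
  rewrite -(hm z z' nz (hcoc _ _ zC z'C)) common_card (split_T C) [\sum_(x in C) _]big1 ?add0r //.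
  by move=> x xC; rewrite (negbTE (hcoc _ _ zC xC)).
have fc : forall x, x \in D -> \sum_(z in C) ((e z x : bool) : nat)%:R = (k%:R - K%:R : R).
  move=> x xD.
  have h1 : (k%:R : R) = \sum_(z in C) ((e x z : bool) : nat)%:R +
                         \sum_(z in D) ((e x z : bool) : nat)%:R.
    by rewrite -(hk x) nbhd_card (split_T C).
  have h2 : (K%:R : R) = \sum_(z in D) ((e x z : bool) : nat)%:R.
    by rewrite -(hKD x xD) nbhd_card.
  rewrite h1 h2 addrK; apply: eq_bigr => z _; by rewrite esym.
have fd : forall x y, x \in D -> y \in D ->
    \sum_(z in C) (((e z x : bool) : nat)%:R * ((e z y : bool) : nat)%:R)
    = (if x == y then k%:R - K%:R
       else if pblock P x == pblock P y then mu%:R - l1%:R else mu%:R - l2%:R : R).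
  move=> x y xD yD; under eq_bigr => z _ do rewrite prodb.
  case: eqVneq => [<-|nxy].
    by rewrite -(fc x xD); apply: eq_bigr => z _; rewrite andbb.
  have h1 : (mu%:R : R) = \sum_(z in C) ((e x z && e y z : bool) : nat)%:R +
                         \sum_(z in D) ((e x z && e y z : bool) : nat)%:R.
    rewrite -(split_T C) -common_card.
    by case exy: (e x y); [rewrite (hl x y nxy exy) | rewrite (hm x y nxy) ?exy].
  have h2 : forall ll, #|nbhd_in e D x :&: nbhd_in e D y| = ll ->
      (ll%:R : R) = \sum_(z in D) ((e x z && e y z : bool) : nat)%:R.
    by move=> ll <-; rewrite common_card.
  have h3 : \sum_(z in C) ((e z x && e z y : bool) : nat)%:R =
     (\sum_(z in C) ((e x z && e y z : bool) : nat)%:R : R).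
    by apply: eq_bigr => z _; rewrite !(esym z).
  rewrite h3 h1.
  case: eqVneq => hb.
    by rewrite (h2 _ (hl1 x y xD yD nxy hb)) addrK.
  by rewrite (h2 _ (hl2 x y xD yD hb)) addrK.
pose F := fun z x => ((e z x : bool) : nat)%:R : R.
have sconst : forall (A : {set T}) (a : R), \sum_(x in A) a = #|A|%:R * a.
  by move=> A a; rewrite sumr_const mulr_natl.
have LC1 : forall a b : R, \sum_(z in C) \sum_(z' in C) (if z == z' then a else b)
    = #|C|%:R * (a + (#|C|%:R - 1) * b).
  move=> a b; rewrite -sconst; apply: eq_bigr => z zC; exact: sum_diag.
have LD1 : forall a b c0 : R, \sum_(x in D) \sum_(y in D)
    (if x == y then a else if pblock P x == pblock P y then b else c0)
    = V%:R * (a + (n%:R - 1) * b + (V%:R - n%:R) * c0).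
  move=> a b c0; rewrite -hVD -sconst; apply: eq_bigr => x xD.
  exact: sum_block.
have I1 : #|C|%:R * ((k%:R : R) ^+ 2 + (#|C|%:R - 1) * mu%:R ^+ 2) =
    V%:R * ((k%:R - K%:R) ^+ 2 + (n%:R - 1) * (mu%:R - l1%:R) ^+ 2
            + (V%:R - n%:R) * (mu%:R - l2%:R) ^+ 2).
  have := L1 C D F.
  rewrite (eq_bigr (fun z => \sum_(z' in C) (if z == z' then (k%:R : R) ^+ 2 else mu%:R ^+ 2))); last first.
    move=> z zC; apply: eq_bigr => z' z'C; rewrite /F fb //; by case: (z == z').
  rewrite LC1 => ->.
  rewrite -LD1; apply: eq_bigr => x xD; apply: eq_bigr => y yD.
  rewrite /F fd //; by case: (x == y); case: (pblock P x == pblock P y).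
have I2 : #|C|%:R * ((k%:R : R) + (#|C|%:R - 1) * mu%:R) = V%:R * (k%:R - K%:R) ^+ 2.
  have := L2 C D F.
  rewrite (eq_bigr (fun z => \sum_(z' in C) (if z == z' then (k%:R : R) else mu%:R))); last first.
    by move=> z zC; apply: eq_bigr => z' z'C; rewrite /F fb.
  rewrite LC1 => ->.
  rewrite -hVD -sconst; apply: eq_bigr => x xD; by rewrite /F fc.
have I3 : V%:R * ((k%:R - K%:R) + (n%:R - 1) * (mu%:R - l1%:R) + (V%:R - n%:R) * (mu%:R - l2%:R))
    = #|C|%:R * (k%:R : R) ^+ 2.
  have := L2 D C (fun x z => F z x).
  rewrite (eq_bigr (fun x => \sum_(y in D) (if x == y then (k%:R : R) - K%:R
       else if pblock P x == pblock P y then mu%:R - l1%:R else mu%:R - l2%:R))); last first.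
    by move=> x xD; apply: eq_bigr => y yD; rewrite /F fd.
  rewrite LD1 => ->.
  rewrite -sconst; apply: eq_bigr => z zC; by rewrite /F fa.
have I4 : #|C|%:R * (k%:R : R) = V%:R * (k%:R - K%:R).
  have : \sum_(z in C) \sum_(x in D) F z x = \sum_(x in D) \sum_(z in C) F z x by exact: exchange_big.
  rewrite (eq_bigr (fun _ => (k%:R : R))); last by move=> z zC; rewrite /F fa.
  rewrite [X in _ = X](eq_bigr (fun _ => (k%:R : R) - K%:R)); last by move=> x xD; rewrite /F fc.
  by rewrite !sconst hVD.
have hvC : (v%:R : R) = #|C|%:R + V%:R by rewrite -hv -hVD -(cardsC C) natrD.
have hcc : #|C|%:R * (k%:R + t) = v%:R * t.
  have hst : s - k%:R != 0 by apply: ltr0_neq0; rewrite subr_lt0; exact: lt_trans hrs hkr.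
  have : #|C|%:R * (s - k%:R) = v%:R * s by rewrite hc divfK.
  rewrite hs; lra.
have c0 : (0 : R) <= #|C|%:R by rewrite ler0n.
have V0 : (0 : R) < V%:R.
  rewrite ltr0n -hVD; apply/card_gt0P; by exists x0.
have hVmn : (V%:R : R) = m%:R * n%:R.
  rewrite -natrM -hVD (card_partition hpart) -hPm.
  rewrite (eq_bigr (fun _ => n)); last by move=> B BP; rewrite hn.
  by rewrite sum_nat_const.
have m1' : (m%:R : R) != 1 by rewrite pnatr_eq1.
have n1' : (n%:R : R) != 1 by rewrite pnatr_eq1.
have l12' : (l1%:R : R) != l2%:R by rewrite eqr_nat.
have := final_alg tpos tt hmu I1 I2 I3 I4 hVmn hvC hcc c0 V0 m1' n1' l12'.
by rewrite hs.
Qed.
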